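(* Let $G$ be a non-discrete lcsc group and $M$ a local $G$-space. Then $\mathrm{vol}_M$ has no atoms.
   Context: An lcsc group is a locally compact second countable group; fix a Haar measure $\lambda$ on $G$. A local $G$-space is an lcsc space $M$ with a continuous map $\alpha:\mathrm{dom}(\alpha)\to M$, $\mathrm{dom}(\alpha)\subset G\times M$ open, written $g.p=\alpha(g,p)$, such that for all $p\in M$: (1) $(1_G,p)\in\mathrm{dom}(\alpha)$ and $1_G.p=p$; (2) if $(g,p)\in\mathrm{dom}(\alpha)$ then $(g^{-1},g.p)\in\mathrm{dom}(\alpha)$ and $g^{-1}.(g.p)=p$; (3) if $(h,p),(g,h.p),(gh,p)\in\mathrm{dom}(\alpha)$ then $gh.p=g.(h.p)$; (4) there is an open neighborhood $O_p$ of $1_G$ with $O_p\times\{p\}\subset\mathrm{dom}(\alpha)$ such that $g\mapsto g.p$ is a homeomorphism of $O_p$ onto an open neighborhood of $p$. A chart centered at $p$ is a homeomorphism $f_p$ from an open neighborhood of $p$ in $M$ onto an open neighborhood $\mathrm{rng}(f_p)$ of $1_G$ with $f_p(g.p)=g$ for all $g\in\mathrm{rng}(f_p)$. The canonical measure $\mathrm{vol}_M$ is the unique Radon measure on $M$ with $\mathrm{vol}_M(K)=\lambda(f_p(K))$ for every chart $f_p$ and Borel $K\subset\mathrm{dom}(f_p)$ (its existence and uniqueness is a known fact). *)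

(* Defs.v *)
From HB Require Import structures.
From mathcomp Require Import all_boot all_order all_algebra.
From mathcomp Require Import all_classical all_reals all_analysis.
Set Implicit Arguments. Unset Strict Implicit. Unset Printing Implicit Defensive.
Import Order.TTheory GRing.Theory Num.Theory.
Local Open Scope classical_set_scope.
Local Open Scope ring_scope.
Local Open Scope ereal_scope.

Notation borel T := (g_sigma_algebraType (@open T)).

Definition borel_set (T : ptopologicalType) (A : set T) : Prop :=
  @measurable _ (borel T) A.

Definition lcsc (T : ptopologicalType) : Prop :=
  [/\ locally_compact [set: T], @second_countable T & hausdorff_space T].

Definition radon (R : realType) (T : ptopologicalType)
    (mu : {measure set (borel T) -> \bar R}) : Prop :=
  [/\ (forall K : set T, compact K -> mu K < +oo),
      (forall A : set T, borel_set A ->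
         mu A = ereal_inf [set mu U | U in [set U : set T | open U /\ A `<=` U]])
    & (forall U : set T, open U ->
         mu U = ereal_sup [set mu K | K in [set K : set T | compact K /\ K `<=` U]])].

Definition topological_group (G : ptopologicalType)
    (mul : G -> G -> G) (inv : G -> G) (one : G) : Prop :=
  [/\ (forall x y z, mul x (mul y z) = mul (mul x y) z),
      (forall x, mul one x = x /\ mul x one = x),
      (forall x, mul (inv x) x = one /\ mul x (inv x) = one),
      continuous (fun q : G * G => mul q.1 q.2)
    & continuous inv].

Definition lcsc_group (G : ptopologicalType)
    (mul : G -> G -> G) (inv : G -> G) (one : G) : Prop :=
  topological_group mul inv one /\ lcsc G.

Definition non_discrete (T : ptopologicalType) : Prop :=
  ~ (forall A : set T, open A).

Definition haar_measure (R : realType) (G : ptopologicalType)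
    (mul : G -> G -> G) (lambda : {measure set (borel G) -> \bar R}) : Prop :=
  [/\ radon lambda,
      (forall (g : G) (A : set G), borel_set A ->
          lambda [set mul g x | x in A] = lambda A)
    & lambda [set: G] <> 0].

Definition homeo_on (X Y : topologicalType) (f : X -> Y) (U : set X) (V : set Y)
    : Prop :=
  [/\ f @` U = V, {in U &, injective f}, {within U, continuous f}
    & exists h : Y -> X,
        [/\ {within V, continuous h},
            (forall x, U x -> h (f x) = x)
          & (forall y, V y -> f (h y) = y)]].

Definition local_G_space (G M : ptopologicalType)
    (mul : G -> G -> G) (inv : G -> G) (one : G)
    (dom : set (G * M)) (alpha : G -> M -> M) : Prop :=
  [/\ lcsc M, open dom
    & {within dom, continuous (fun q : G * M => alpha q.1 q.2)}] /\
  [/\ (forall p, dom (one, p) /\ alpha one p = p),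
      (forall g p, dom (g, p) ->
          dom (inv g, alpha g p) /\ alpha (inv g) (alpha g p) = p),
      (forall g h p, dom (h, p) -> dom (g, alpha h p) -> dom (mul g h, p) ->
          alpha (mul g h) p = alpha g (alpha h p))
    & (forall p, exists O : set G,
          [/\ open O, O one, (forall g, O g -> dom (g, p)),
              open ((fun g => alpha g p) @` O)
            & homeo_on (fun g => alpha g p) O ((fun g => alpha g p) @` O)])].

Definition chart (G M : ptopologicalType) (one : G)
    (dom : set (G * M)) (alpha : G -> M -> M)
    (p : M) (D : set M) (f : M -> G) : Prop :=
  [/\ open D, D p, open (f @` D), (f @` D) one & homeo_on f D (f @` D)] /\
  (forall g, (f @` D) g -> [/\ dom (g, p), D (alpha g p) & f (alpha g p) = g]).

Definition canonical_measure (R : realType) (G M : ptopologicalType) (one : G)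
    (lambda : {measure set (borel G) -> \bar R})
    (dom : set (G * M)) (alpha : G -> M -> M)
    (vol : {measure set (borel M) -> \bar R}) : Prop :=
  radon vol /\
  (forall p D f, chart one dom alpha p D f ->
     forall K : set M, borel_set K -> K `<=` D -> vol K = lambda (f @` K)).

(* Main.v *)
Require Import Defs.
From HB Require Import structures.
From mathcomp Require Import all_boot all_order all_algebra.
From mathcomp Require Import all_classical all_reals all_analysis.
Import Order.TTheory GRing.Theory Num.Theory.
Local Open Scope classical_set_scope.
Local Open Scope ring_scope.
Local Open Scope ereal_scope.

Lemma point_nbhs_false (G : ptopologicalType)
    (mul : G -> G -> G) (inv : G -> G) (one : G)
    (HG : topological_group mul inv one) (Hnd : non_discrete G) :
  nbhs one [set one] -> False.
Proof.
case: HG => Hassoc Hone Hinv Hmul _ H1.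
apply: Hnd => A; rewrite openE => x Ax.
suff Hx : nbhs x [set x] by apply: filterS Hx => y ->.
have cv : (fun y => mul (inv x) y) @ x --> mul (inv x) x.
  apply: (@continuous2_cvg _ _ _ _ _ _ (fun _ => inv x) id mul).
  - exact: (Hmul (inv x, x)).
  - exact: cvg_cst.
  - exact: cvg_id.
rewrite (proj1 (Hinv x)) in cv.
have Hn : nbhs x ((fun y => mul (inv x) y) @^-1` [set one]) := cv _ H1.
apply: filterS Hn => y /= Hy.
by rewrite -(proj1 (Hone y)) -(proj2 (Hinv x)) -Hassoc Hy (proj2 (Hone x)).
Qed.

Lemma haar_point0 (R : realType) (G : ptopologicalType)
    (mul : G -> G -> G) (inv : G -> G) (one : G)
    (HG : lcsc_group mul inv one) (Hnd : non_discrete G)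
    (lambda : {measure set (borel G) -> \bar R}) (Hlambda : haar_measure mul lambda) :
  lambda [set one] = 0.
Proof.
case: HG => Htg [Hlc Hsc Hhs].
have Hacc := hausdorff_accessible Hhs.
have mcl : forall A : set G, closed A -> borel_set A.
  move=> A cA; rewrite /borel_set -[A]setCK; apply: measurableC.
  by apply: sub_gen_smallest; exact: closed_openC.
have mpt : forall x : G, borel_set [set x].
  by move=> x; apply: mcl; exact: accessible_closed_set1.
case: Hlambda => [[Hfin _ _] Hinv _].
have Hc : forall g, lambda [set g] = lambda [set one].
  move=> g; rewrite -(Hinv g [set one] (mpt one)); congr (lambda _).
  by rewrite image_set1; case: Htg => _ Hone _ _ _; rewrite (proj2 (Hone g)).
case: (eqVneq (lambda [set one]) 0) => // Hc0; exfalso.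
have [U] := Hlc one I; rewrite withinET => HU [cU clU].
have mU : borel_set U := mcl U clU.
have HUfin := Hfin U cU.
have Uinf : infinite_set U.
  move=> Ufin; apply: (@point_nbhs_false _ _ _ _ Htg Hnd).
  have cl : closed (U `\ one).
    by apply: (proj1 (@accessible_finite_set_closed G) Hacc); exact: finite_setD.
  have HV : nbhs one (~` (U `\ one)).
    apply: open_nbhs_nbhs; split; first exact: closed_openC.
    by move=> [] _ ; apply.
  apply: filterS (filterI HU HV) => y [Uy] /= nUy.
  by apply: contra_notP nUy => yn1; split.
move: Uinf => /infiniteP/pcard_leP/injfunPex [f fU finj].
have Hn : forall n, lambda [set one] *+ n <= lambda U.
  move=> n.
  have <- : lambda (\big[setU/set0]_(i < n) [set f i]) = lambda [set one] *+ n.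
    rewrite measure_bigsetU_ord_cond.
    - by rewrite (eq_bigr (fun _ => lambda [set one])) ?sumr_const ?card_ord // => i _; exact: Hc.
    - by move=> i _; exact: mpt.
    - move=> i j _ _ [x [/= -> Hij]]; by apply: val_inj; apply: finj; rewrite ?inE.
  apply: (@le_measure _ _ _ lambda); rewrite ?inE //.
  - by apply: bigsetU_measurable => i _; exact: mpt.
  - apply: (big_ind (fun X => X `<=` U)) => //.
      by move=> A B HA HB x [/HA|/HB].
    by move=> i _ x ->; apply: fU.
have c0 : 0 <= lambda [set one] by [].
move: (Hn 1%N) HUfin Hc0 c0 (Hn (Num.Def.archi_bound (fine (lambda U) / fine (lambda [set one])))%R).
case: (lambda [set one]) => [c| |]; case: (lambda U) => [u| |] //.
move=> _ _ cn0 c0; rewrite -EFin_natmul lee_fin /= => Hle.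
have cpos : (0 < c)%R by rewrite lt_def cn0 -lee_fin c0.
have u0 : (0 <= u)%R := le_trans (mulrn_wge0 _ (ltW cpos)) Hle.
have := archi_boundP (x := (u / c)%R).
move=> /(_ (divr_ge0 u0 (ltW cpos))); rewrite ltr_pdivrMr // mulr_natl => H.
by have := lt_le_trans H Hle; rewrite ltxx.
Qed.

Theorem lemma6p11 (R : realType) (G : ptopologicalType)
    (mul : G -> G -> G) (inv : G -> G) (one : G)
    (HG : lcsc_group mul inv one) (Hnd : non_discrete G)
    (lambda : {measure set (borel G) -> \bar R}) (Hlambda : haar_measure mul lambda)
    (M : ptopologicalType) (dom : set (G * M)) (alpha : G -> M -> M)
    (HM : local_G_space mul inv one dom alpha)
    (vol : {measure set (borel M) -> \bar R})
    (Hvol : canonical_measure one lambda dom alpha vol) :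
  forall p : M, vol [set p] = 0.
Proof.
move=> p.
case: HM => [[[_ _ HhsM] Hdomo Hcont] [Hone Hinvd Hcomp Hloc]].
have [W [oO O1 Odom oV [Himg Hinj Hcn [h [hc hK fK]]]]] := Hloc p.
set V := (fun g => alpha g p) @` W in oV Himg hc fK *.
have hV : h @` V = W.
  apply/seteqP; split.
  - by move=> _ [_ [g Og <-] <-]; rewrite hK.
  - move=> g Og; exists (alpha g p); [by exists g | exact: hK].
have Hch : chart one dom alpha p V h.
  split; first split.
  - exact: oV.
  - by exists one => //; exact: (proj2 (Hone p)).
  - by rewrite hV.
  - by rewrite hV.
  - rewrite hV; split.
    + exact: hV.
    + move=> x y /[!inE] Vx Vy hxy; by rewrite -(fK x Vx) -(fK y Vy) hxy.
    + exact: hc.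
    + by exists (fun g => alpha g p); split.
  - rewrite hV => g Og; split; [exact: Odom | by exists g | exact: hK].
case: Hvol => _ Hv.
rewrite (Hv p V h Hch [set p]).
- rewrite image_set1.
  have -> : h p = one by rewrite -{1}(proj2 (Hone p)) hK.
  exact: (@haar_point0 _ _ _ _ _ HG Hnd _ Hlambda).
- rewrite /borel_set -[X in measurable X]setCK; apply: measurableC.
  apply: sub_gen_smallest; apply: closed_openC.
  exact: accessible_closed_set1 (hausdorff_accessible HhsM) p.
- by move=> x ->; exists one => //; exact: (proj2 (Hone p)).
Qed.
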